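(* Let $n\ge 1$, $t_1<\dots<t_{n+1}$, let $\varphi_0,\dots,\varphi_{n+2}$ be the natural basis and $\mathbf{C}=[c_{k,l}]_{k,l=1}^{n+3}$ with $c_{k,l}=\int_{t_1}^{t_{n+1}}\varphi_{k-1}''(t)\varphi_{l-1}''(t)\,dt$. Then: (i) $\mathbf{C}$ is symmetric and non-negative definite; (ii) for $u_1,u_{n+1}\in\mathbb{R}$ and $\boldsymbol{p}\in\mathbb{R}^{n+1}$, $(u_1,\boldsymbol{p}^T,u_{n+1})\mathbf{C}(u_1,\boldsymbol{p}^T,u_{n+1})^T=0$ if and only if $u_1=u_{n+1}=0$ and $\boldsymbol{p}$ belongs to the range $R(\mathbf{L})$ of the $(n+1)\times 2$ matrix $\mathbf{L}$ whose $i$-th row is $(1,t_i)$; (iii) $c_{1,j+1}=c_{n+3,j+1}=0$ for all $j=1,\dots,n+1$ (so, by symmetry, $\mathbf{C}$ has the block form with $c_{1,1},c_{1,n+3},c_{n+3,1},c_{n+3,n+3}$ in the corners, the middle block $\mathbf{C}(2,n+2)=[c_{ij}:i,j=2,\dots,n+2]$, and zeros elsewhere); (iv) the $2\times2$ matrix $\begin{pmatrix}c_{1,1}&c_{1,n+3}\\ c_{n+3,1}&c_{n+3,n+3}\end{pmatrix}$ is symmetric positive definite; (v) the null space of $\mathbf{C}(2,n+2)$ equals $R(\mathbf{L})$; (vi) for $s=u_1\varphi_0+\sum_{j=1}^{n+1}p_j\varphi_j+u_{n+1}\varphi_{n+2}$, $$\int_{t_1}^{t_{n+1}}|s''(t)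|^2dt=u_1^2c_{1,1}+u_{n+1}^2c_{n+3,n+3}+2c_{1,n+3}u_1u_{n+1}+\boldsymbol{p}^T\mathbf{C}(2,n+2)\boldsymbol{p}.$$
   Context: $S_3\cap C^2$ is the set of $C^2$ functions on $[t_1,t_{n+1}]$ that are cubic polynomials on each $[t_i,t_{i+1}]$. The natural basis is defined as follows: $\varphi_0$ is the unique element of $S_3\cap C^2$ with $\varphi_0(t_i)=0$ for all $i$, $\varphi_0''(t_1)=1$, $\varphi_0''(t_{n+1})=0$; for $j=1,\dots,n+1$, $\varphi_j$ is the unique element of $S_3\cap C^2$ with $\varphi_j(t_i)=\delta_{ij}$ for all $i$ and $\varphi_j''(t_1)=\varphi_j''(t_{n+1})=0$; $\varphi_{n+2}$ is the unique element of $S_3\cap C^2$ with $\varphi_{n+2}(t_i)=0$ for all $i$, $\varphi_{n+2}''(t_1)=0$, $\varphi_{n+2}''(t_{n+1})=1$. Every $s\in S_3\cap C^2$ equals $u_1\varphi_0+\sum_j p_j\varphi_j+u_{n+1}\varphi_{n+2}$ with $p_j=s(t_j)$, $u_1=s''(t_1)$, $u_{n+1}=s''(t_{n+1})$. *)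

(* Defs.v *)
From Stdlib Require Import Reals.
From Coquelicot Require Import Coquelicot.
Open Scope R_scope.

Definition has_deriv_on (a b : R) (f f' : R -> R) : Prop :=
  forall x, a <= x <= b ->
  forall eps, 0 < eps -> exists delta, 0 < delta /\
    forall y, a <= y <= b -> Rabs (y - x) < delta ->
      Rabs (f y - f x - f' x * (y - x)) <= eps * Rabs (y - x).

Definition cont_on (a b : R) (g : R -> R) : Prop :=
  forall x, a <= x <= b ->
  forall eps, 0 < eps -> exists delta, 0 < delta /\
    forall y, a <= y <= b -> Rabs (y - x) < delta -> Rabs (g y - g x) < eps.

Definition C2_on (a b : R) (s s2 : R -> R) : Prop :=
  exists s1, has_deriv_on a b s s1 /\ has_deriv_on a b s1 s2 /\ cont_on a b s2.

(* knots t_1 < ... < t_{n+1} (t indexed by nat, indices 1..n+1 are used) *)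
Definition knots_incr (n : nat) (t : nat -> R) : Prop :=
  forall i, (1 <= i <= n)%nat -> t i < t (S i).

Definition piecewise_cubic (n : nat) (t : nat -> R) (s : R -> R) : Prop :=
  forall i, (1 <= i <= n)%nat ->
  exists c0 c1 c2 c3 : R, forall x, t i <= x <= t (S i) ->
    s x = c0 + c1 * x + c2 * x ^ 2 + c3 * x ^ 3.

Definition S3C2 (n : nat) (t : nat -> R) (s s2 : R -> R) : Prop :=
  piecewise_cubic n t s /\ C2_on (t 1%nat) (t (S n)) s s2.

Definition natural_basis (n : nat) (t : nat -> R) (phi phi2 : nat -> R -> R) : Prop :=
  (forall k, (k <= n + 2)%nat -> S3C2 n t (phi k) (phi2 k)) /\
  (forall i, (1 <= i <= n + 1)%nat -> phi 0%nat (t i) = 0) /\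
  phi2 0%nat (t 1%nat) = 1 /\ phi2 0%nat (t (S n)) = 0 /\
  (forall j, (1 <= j <= n + 1)%nat ->
     (forall i, (1 <= i <= n + 1)%nat ->
        phi j (t i) = if Nat.eqb i j then 1 else 0) /\
     phi2 j (t 1%nat) = 0 /\ phi2 j (t (S n)) = 0) /\
  (forall i, (1 <= i <= n + 1)%nat -> phi (n + 2)%nat (t i) = 0) /\
  phi2 (n + 2)%nat (t 1%nat) = 0 /\ phi2 (n + 2)%nat (t (S n)) = 1.

Definition Cmat (n : nat) (t : nat -> R) (phi2 : nat -> R -> R) (k l : nat) : R :=
  RInt (fun x => phi2 (k - 1)%nat x * phi2 (l - 1)%nat x) (t 1%nat) (t (S n)).

Definition qform (m : nat -> nat -> R) (lo hi : nat) (v : nat -> R) : R :=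
  sum_n_m (fun k => sum_n_m (fun l => v k * m k l * v l) lo hi) lo hi.

(* the vector (u_1, p_1, ..., p_{n+1}, u_{n+1}), indexed 1..n+3 *)
Definition ext_vec (n : nat) (u1 : R) (p : nat -> R) (un1 : R) (k : nat) : R :=
  if Nat.eqb k 1 then u1 else if Nat.eqb k (n + 3) then un1 else p (k - 1)%nat.

(* p (indices 1..n+1) lies in the range R(L), L having rows (1, t_i) *)
Definition in_range_L (n : nat) (t : nat -> R) (p : nat -> R) : Prop :=
  exists a b : R, forall i, (1 <= i <= n + 1)%nat -> p i = a + b * t i.

(* Main.v *)
Require Import Defs.
From Stdlib Require Import Reals Lra Lia FunctionalExtensionality.
From Coquelicot Require Import Coquelicot.
Open Scope R_scope.

Definition cl (a b x : R) := Rmax a (Rmin b x).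

Lemma cl_in a b x : a <= b -> a <= cl a b x <= b.
Proof. intros; unfold cl, Rmax, Rmin; repeat destruct Rle_dec; lra. Qed.
Lemma cl_id a b x : a <= x <= b -> cl a b x = x.
Proof. intros; unfold cl, Rmax, Rmin; repeat destruct Rle_dec; lra. Qed.
Lemma cl_lo a b x : a <= b -> x <= a -> cl a b x = a.
Proof. intros; unfold cl, Rmax, Rmin; repeat destruct Rle_dec; lra. Qed.
Lemma cl_hi a b x : a <= b -> b <= x -> cl a b x = b.
Proof. intros; unfold cl, Rmax, Rmin; repeat destruct Rle_dec; lra. Qed.
Lemma cl_lip a b x y : a <= b -> Rabs (cl a b x - cl a b y) <= Rabs (x - y).
Proof. intros; unfold cl, Rmax, Rmin; repeat destruct Rle_dec; unfold Rabs;
  repeat destruct Rcase_abs; lra. Qed.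

Lemma cl_cont a b x : a <= b -> continuous (cl a b) x.
Proof.
  intros Hab. apply continuity_pt_filterlim.
  intros eps He. exists eps; split; auto.
  intros y [_ Hy]. simpl in *. unfold R_dist in *.
  eapply Rle_lt_trans; [apply cl_lip; auto| auto].
Qed.

Definition ext a b (F f : R -> R) x := F (cl a b x) + f (cl a b x) * (x - cl a b x).

Lemma bound_dpl E x l :
  (forall eps, 0 < eps -> exists delta, 0 < delta /\ forall y, Rabs (y - x) < delta ->
     Rabs (E y - E x - l * (y - x)) <= eps * Rabs (y - x)) ->
  derivable_pt_lim E x l.
Proof.
  intros H eps He. destruct (H (eps/2)) as [d [Hd Hy]]; [lra|].
  exists (mkposreal d Hd). intros h Hh0 Hh. simpl in Hh.
  specialize (Hy (x + h)). replace (x + h - x) with h in Hy by ring.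
  specialize (Hy Hh).
  replace ((E (x + h) - E x) / h - l) with ((E (x + h) - E x - l * h) / h) by (field; auto).
  unfold Rdiv. rewrite Rabs_mult, Rabs_inv.
  assert (0 < Rabs h) by (apply Rabs_pos_lt; auto).
  apply Rle_lt_trans with (eps / 2 * Rabs h * / Rabs h).
  - apply Rmult_le_compat_r; auto. left; apply Rinv_0_lt_compat; auto.
  - field_simplify; lra.
Qed.

Lemma ext_in a b F f y : a <= y <= b -> ext a b F f y = F y.
Proof. intros; unfold ext; rewrite cl_id; auto; ring. Qed.

Lemma ext_deriv a b F f : a < b -> has_deriv_on a b F f ->
  forall x, derivable_pt_lim (ext a b F f) x (f (cl a b x)).
Proof.
  intros Hab Hd x. apply bound_dpl. intros eps He.
  destruct (Rlt_le_dec x a) as [Hxa|Hxa].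
  { exists (a - x); split; [lra|]. intros y Hy.
    unfold ext. rewrite !(cl_lo a b); try lra.
    2:{ unfold Rabs in Hy; destruct Rcase_abs in Hy; lra. }
    replace (F a + f a * (y - a) - (F a + f a * (x - a)) - f a * (y - x)) with 0 by ring.
    rewrite Rabs_R0. apply Rmult_le_pos; [lra|apply Rabs_pos]. }
  destruct (Rlt_le_dec b x) as [Hxb|Hxb].
  { exists (x - b); split; [lra|]. intros y Hy.
    unfold ext. rewrite !(cl_hi a b); try lra.
    2:{ unfold Rabs in Hy; destruct Rcase_abs in Hy; lra. }
    replace (F b + f b * (y - b) - (F b + f b * (x - b)) - f b * (y - x)) with 0 by ring.
    rewrite Rabs_R0. apply Rmult_le_pos; [lra|apply Rabs_pos]. }
  rewrite (cl_id a b x) by lra.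
  destruct (Hd x (conj Hxa Hxb) eps He) as [d0 [Hd0 Hy0]].
  exists (Rmin d0 (Rmin (if Req_EM_T x a then b - a else x - a) (if Req_EM_T x b then b - a else b - x))).
  split.
  { repeat apply Rmin_pos; auto; destruct Req_EM_T; lra. }
  intros y Hy.
  assert (Hy1 : Rabs (y - x) < d0) by (eapply Rlt_le_trans; [apply Hy| apply Rmin_l]).
  assert (Hy2 := Rlt_le_trans _ _ _ Hy (Rmin_r _ _)).
  assert (Hy3 := Rlt_le_trans _ _ _ Hy2 (Rmin_l _ _)).
  assert (Hy4 := Rlt_le_trans _ _ _ Hy2 (Rmin_r _ _)).
  rewrite (ext_in a b F f x) by lra.
  destruct (Rlt_le_dec y a) as [Hya|Hya].
  { destruct Req_EM_T as [e|e].
    - subst x. unfold ext. rewrite (cl_lo a b) by lra.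
      replace (F a + f a * (y - a) - F a - f a * (y - a)) with 0 by ring.
      rewrite Rabs_R0. apply Rmult_le_pos; [lra|apply Rabs_pos].
    - exfalso. unfold Rabs in Hy3; destruct Rcase_abs in Hy3; lra. }
  destruct (Rlt_le_dec b y) as [Hyb|Hyb].
  { destruct Req_EM_T as [e|e] in Hy4.
    - subst x. unfold ext. rewrite (cl_hi a b) by lra.
      replace (F b + f b * (y - b) - F b - f b * (y - b)) with 0 by ring.
      rewrite Rabs_R0. apply Rmult_le_pos; [lra|apply Rabs_pos].
    - exfalso. unfold Rabs in Hy4; destruct Rcase_abs in Hy4; lra. }
  rewrite ext_in by lra. apply Hy0; auto.
Qed.

Lemma der_to_hd c d G g F :
  (forall x, c <= x <= d -> derivable_pt_lim G x (g x)) ->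
  (forall x, c <= x <= d -> G x = F x) -> has_deriv_on c d F g.
Proof.
  intros Hg Heq x Hx eps He.
  destruct (Hg x Hx eps He) as [d0 Hd0].
  exists d0; split; [apply cond_pos|]. intros y Hy Hyx.
  rewrite <- !Heq by auto.
  destruct (Req_dec y x) as [e|e].
  { subst; replace (G x - G x - g x * (x - x)) with 0 by ring; rewrite Rabs_R0.
    apply Rmult_le_pos; [lra|apply Rabs_pos]. }
  assert (Hh : y - x <> 0) by lra.
  specialize (Hd0 (y - x) Hh Hyx). replace (x + (y - x)) with y in Hd0 by ring.
  replace (G y - G x - g x * (y - x)) with ((y - x) * ((G y - G x) / (y - x) - g x)) by (field; auto).
  rewrite Rabs_mult, Rmult_comm. apply Rmult_le_compat_r; [apply Rabs_pos|lra].
Qed.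

Lemma hd_is_derive a b F f : a < b -> has_deriv_on a b F f ->
  forall x, is_derive (ext a b F f) x (f (cl a b x)).
Proof. intros; apply is_derive_Reals, ext_deriv; auto. Qed.

Lemma hd_plus a b F f G g : a < b -> has_deriv_on a b F f -> has_deriv_on a b G g ->
  has_deriv_on a b (fun x => F x + G x) (fun x => f x + g x).
Proof.
  intros Hab HF HG.
  apply der_to_hd with (G := fun x => ext a b F f x + ext a b G g x).
  - intros x Hx. apply is_derive_Reals.
    replace (f x + g x) with (plus (f (cl a b x)) (g (cl a b x))).
    2:{ rewrite cl_id; auto. }
    apply (is_derive_plus (ext a b F f) (ext a b G g)); apply hd_is_derive; auto.
  - intros; rewrite !ext_in; auto.
Qed.

Lemma hd_mult a b F f G g : a < b -> has_deriv_on a b F f -> has_deriv_on a b G g ->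
  has_deriv_on a b (fun x => F x * G x) (fun x => f x * G x + F x * g x).
Proof.
  intros Hab HF HG.
  apply der_to_hd with (G := fun x => ext a b F f x * ext a b G g x).
  - intros x Hx. apply is_derive_Reals.
    replace (f x * G x + F x * g x) with
      (plus (scal (f (cl a b x)) (ext a b G g x)) (scal (ext a b F f x) (g (cl a b x)))).
    2:{ rewrite !ext_in, cl_id; auto. }
    apply (is_derive_mult (ext a b F f) (ext a b G g)); try apply hd_is_derive; auto.
    intros; apply Rmult_comm.
  - intros; rewrite !ext_in; auto.
Qed.

Lemma hd_ext_der a b F f1 f2 : (forall x, a <= x <= b -> f1 x = f2 x) ->
  has_deriv_on a b F f1 -> has_deriv_on a b F f2.
Proof. intros He H x Hx eps Heps. rewrite <- He by auto. apply H; auto. Qed.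

Lemma hd_ext_fun a b F1 F2 f : (forall x, a <= x <= b -> F1 x = F2 x) ->
  has_deriv_on a b F1 f -> has_deriv_on a b F2 f.
Proof.
  intros He H x Hx eps Heps. destruct (H x Hx eps Heps) as [d [Hd Hy]].
  exists d; split; auto. intros y Hy1 Hy2. rewrite <- !He by auto. auto.
Qed.

Lemma hd_restr a b c d F f : a <= c -> d <= b -> has_deriv_on a b F f -> has_deriv_on c d F f.
Proof.
  intros H1 H2 H x Hx eps Heps. destruct (H x ltac:(lra) eps Heps) as [dd [Hd Hy]].
  exists dd; split; auto. intros y Hy1 Hy2. apply Hy; auto; lra.
Qed.

Lemma hd_poly a b F f : (forall x, is_derive F x (f x)) -> has_deriv_on a b F f.
Proof. intros H. apply der_to_hd with F; auto. intros; apply is_derive_Reals; auto. Qed.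

Lemma hd_const a b k : has_deriv_on a b (fun _ => k) (fun _ => 0).
Proof. apply der_to_hd with (fun _ => k); auto. intros; apply derivable_pt_lim_const. Qed.

Lemma hd_scal a b k F f : a < b -> has_deriv_on a b F f ->
  has_deriv_on a b (fun x => k * F x) (fun x => k * f x).
Proof.
  intros Hab H. eapply hd_ext_der; [|apply hd_mult; [auto|apply hd_const|apply H]].
  intros; simpl; ring.
Qed.

Lemma hd_unique a b F f1 f2 : a < b -> has_deriv_on a b F f1 -> has_deriv_on a b F f2 ->
  forall x, a <= x <= b -> f1 x = f2 x.
Proof.
  intros Hab H1 H2 x Hx. destruct (Req_dec (f1 x) (f2 x)) as [|Hne]; auto. exfalso.
  set (e := Rabs (f1 x - f2 x)).
  assert (He : 0 < e) by (apply Rabs_pos_lt; lra).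
  destruct (H1 x Hx (e/4)) as [d1 [Hd1 Hy1]]; [lra|].
  destruct (H2 x Hx (e/4)) as [d2 [Hd2 Hy2]]; [lra|].
  set (h := Rmin (Rmin d1 d2) (b - a) / 2).
  assert (Hh0 : 0 < h) by (unfold h; assert (0 < Rmin (Rmin d1 d2) (b-a)) by (repeat apply Rmin_pos; lra); lra).
  assert (Hh1 : h < d1) by (unfold h; pose proof (Rmin_l (Rmin d1 d2) (b-a)); pose proof (Rmin_l d1 d2); lra).
  assert (Hh2 : h < d2) by (unfold h; pose proof (Rmin_l (Rmin d1 d2) (b-a)); pose proof (Rmin_r d1 d2); lra).
  assert (Hh3 : 2 * h <= b - a) by (unfold h; pose proof (Rmin_r (Rmin d1 d2) (b-a)); lra).
  assert (exists y, a <= y <= b /\ Rabs (y - x) = h) as [y [Hy Hyh]].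
  { destruct (Rle_dec (x + h) b).
    - exists (x + h); split; [lra|]. replace (x + h - x) with h by ring. apply Rabs_right; lra.
    - exists (x - h); split; [lra|]. replace (x - h - x) with (- h) by ring.
      rewrite Rabs_Ropp. apply Rabs_right; lra. }
  specialize (Hy1 y Hy ltac:(lra)). specialize (Hy2 y Hy ltac:(lra)).
  assert (Rabs ((f1 x - f2 x) * (y - x)) <= e / 2 * Rabs (y - x)).
  { replace ((f1 x - f2 x) * (y - x)) with
      ((F y - F x - f2 x * (y - x)) - (F y - F x - f1 x * (y - x))) by ring.
    eapply Rle_trans; [apply Rabs_triang|]. rewrite Rabs_Ropp. lra. }
  rewrite Rabs_mult in H. fold e in H. rewrite Hyh in H. nra.
Qed.

Definition cnt a b (f : R -> R) := forall x, continuous (fun y => f (cl a b y)) x.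

Lemma cont_on_cnt a b f : a <= b -> cont_on a b f -> cnt a b f.
Proof.
  intros Hab H x. apply continuity_pt_filterlim.
  intros eps He. destruct (H (cl a b x) (cl_in a b x Hab) eps He) as [d [Hd Hy]].
  exists d; split; auto. intros y [_ Hyx]. simpl in *. unfold R_dist in *.
  apply Hy. apply cl_in; auto. eapply Rle_lt_trans; [apply cl_lip; auto|auto].
Qed.

Lemma cnt_glob a b f : a <= b -> (forall x, continuous f x) -> cnt a b f.
Proof. intros Hab H x. apply (continuous_comp (cl a b) f). apply cl_cont; auto. apply H. Qed.

Lemma cnt_plus a b f g : cnt a b f -> cnt a b g -> cnt a b (fun x => f x + g x).
Proof. intros Hf Hg x. apply (continuous_plus (fun y => f (cl a b y)) (fun y => g (cl a b y))); auto. Qed.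

Lemma cnt_mult a b f g : cnt a b f -> cnt a b g -> cnt a b (fun x => f x * g x).
Proof. intros Hf Hg x. apply (continuous_mult (fun y => f (cl a b y)) (fun y => g (cl a b y))); auto. Qed.

Lemma cnt_const a b k : cnt a b (fun _ => k).
Proof. intros x; apply continuous_const. Qed.

Lemma cnt_scal a b k f : cnt a b f -> cnt a b (fun x => k * f x).
Proof. intros; apply cnt_mult; auto; apply cnt_const. Qed.

Lemma cnt_restr a b c d f : a <= c -> c <= d -> d <= b -> cnt a b f -> cnt c d f.
Proof.
  intros H1 H2 H3 H x.
  apply continuous_ext with (f := fun y => f (cl a b (cl c d y))).
  { intros y. rewrite (cl_id a b); auto. pose proof (cl_in c d y H2); lra. }
  apply (continuous_comp (cl c d) (fun y => f (cl a b y))); auto. apply cl_cont; auto.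
Qed.

Lemma cnt_ex a b f : a <= b -> cnt a b f -> ex_RInt f a b.
Proof.
  intros Hab H. apply ex_RInt_ext with (fun y => f (cl a b y)).
  { intros x Hx. rewrite Rmin_left, Rmax_right in Hx by auto. rewrite cl_id; auto; lra. }
  apply (ex_RInt_continuous (V := R_CompleteNormedModule)). intros; apply H.
Qed.

Lemma FTC a b F f : a < b -> has_deriv_on a b F f -> cnt a b f ->
  is_RInt f a b (F b - F a).
Proof.
  intros Hab Hd Hc.
  apply is_RInt_ext with (fun y => f (cl a b y)).
  { intros x Hx. rewrite Rmin_left, Rmax_right in Hx by lra. rewrite cl_id; auto; lra. }
  replace (F b - F a) with (minus (ext a b F f b) (ext a b F f a)).
  2:{ rewrite !ext_in; try lra. reflexivity. }
  apply (is_RInt_derive (V := R_CompleteNormedModule)).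
  - intros; apply hd_is_derive; auto.
  - intros; apply Hc.
Qed.

Lemma sum_zero_R (m M : nat) : (M < m)%nat -> forall a : nat -> R, sum_n_m a m M = 0.
Proof. intros; rewrite sum_n_m_zero; auto. Qed.
Lemma sum_Sm_R (a : nat -> R) m M : (m <= S M)%nat -> sum_n_m a m (S M) = sum_n_m a m M + a (S M).
Proof. intros; rewrite sum_n_Sm; auto. Qed.

Lemma fam_sum2 (Pr : (R->R) -> (R->R) -> Prop) :
  Pr (fun _ => 0) (fun _ => 0) ->
  (forall f1 f2 g1 g2, Pr f1 f2 -> Pr g1 g2 -> Pr (fun x => f1 x + g1 x) (fun x => f2 x + g2 x)) ->
  forall (F G : nat -> R -> R) m M, (forall k, (m <= k <= M)%nat -> Pr (F k) (G k)) ->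
  Pr (fun x => sum_n_m (fun k => F k x) m M) (fun x => sum_n_m (fun k => G k x) m M).
Proof.
  intros H0 Hp F G m M. induction M as [|M IH]; intros HF.
  - destruct m.
    + replace (fun x => sum_n_m (fun k => F k x) 0 0) with (F 0%nat)
        by (apply functional_extensionality; intros; rewrite sum_n_n; auto).
      replace (fun x => sum_n_m (fun k => G k x) 0 0) with (G 0%nat)
        by (apply functional_extensionality; intros; rewrite sum_n_n; auto).
      apply HF; lia.
    + replace (fun x => sum_n_m (fun k => F k x) (S m) 0) with (fun _ : R => 0)
        by (apply functional_extensionality; intros; rewrite sum_zero_R; auto; lia).
      replace (fun x => sum_n_m (fun k => G k x) (S m) 0) with (fun _ : R => 0)
        by (apply functional_extensionality; intros; rewrite sum_zero_R; auto; lia).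
      auto.
  - destruct (Compare_dec.le_dec m (S M)).
    + replace (fun x => sum_n_m (fun k => F k x) m (S M)) with
        (fun x => sum_n_m (fun k => F k x) m M + F (S M) x)
        by (apply functional_extensionality; intros; rewrite sum_Sm_R; auto).
      replace (fun x => sum_n_m (fun k => G k x) m (S M)) with
        (fun x => sum_n_m (fun k => G k x) m M + G (S M) x)
        by (apply functional_extensionality; intros; rewrite sum_Sm_R; auto).
      apply Hp. apply IH; intros; apply HF; lia. apply HF; lia.
    + replace (fun x => sum_n_m (fun k => F k x) m (S M)) with (fun _ : R => 0)
        by (apply functional_extensionality; intros; rewrite sum_zero_R; auto; lia).
      replace (fun x => sum_n_m (fun k => G k x) m (S M)) with (fun _ : R => 0)
        by (apply functional_extensionality; intros; rewrite sum_zero_R; auto; lia).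
      auto.
Qed.

Lemma fam_sum (Pr : (R->R) -> Prop) :
  Pr (fun _ => 0) ->
  (forall f g, Pr f -> Pr g -> Pr (fun x => f x + g x)) ->
  forall (F : nat -> R -> R) m M, (forall k, (m <= k <= M)%nat -> Pr (F k)) ->
  Pr (fun x => sum_n_m (fun k => F k x) m M).
Proof.
  intros H0 Hp F m M HF.
  exact (fam_sum2 (fun f _ => Pr f) H0 (fun f1 f2 g1 g2 H1 H2 => Hp f1 g1 H1 H2) F F m M HF).
Qed.

Lemma is_RInt_zero a b : is_RInt (fun _ => 0) a b 0.
Proof. assert (H0 := is_RInt_const (V:=R_NormedModule) a b 0).
 unfold scal in H0; simpl in H0; unfold mult in H0; simpl in H0. rewrite Rmult_0_r in H0. exact H0. Qed.

Lemma is_RInt_sum a b (F : nat -> R -> R) (I : nat -> R) m M :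
  (forall k, (m <= k <= M)%nat -> is_RInt (F k) a b (I k)) ->
  is_RInt (fun x => sum_n_m (fun k => F k x) m M) a b (sum_n_m I m M).
Proof.
  induction M as [|M IH]; intros HF.
  - destruct m.
    + rewrite sum_n_n. eapply is_RInt_ext; [|apply HF; lia].
      intros; rewrite sum_n_n; auto.
    + rewrite sum_zero_R by lia. eapply is_RInt_ext; [|apply is_RInt_zero].
      intros; rewrite sum_zero_R by lia; reflexivity.

  - destruct (Compare_dec.le_dec m (S M)).
    + rewrite sum_Sm_R by auto.
      eapply is_RInt_ext; [|apply (is_RInt_plus (V := R_NormedModule)); [apply IH|apply HF]].
      * intros; rewrite sum_Sm_R; auto.
      * intros; apply HF; lia.
      * lia.
    + rewrite sum_zero_R by lia. eapply is_RInt_ext; [|apply is_RInt_zero].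
      intros; rewrite sum_zero_R by lia; reflexivity.
Qed.

Lemma is_RInt_scalR a b f l k : is_RInt f a b l -> is_RInt (fun x => k * f x) a b (k * l).
Proof. intros H. apply (is_RInt_scal (V := R_NormedModule) f a b k l H). Qed.

Lemma is_RInt_plusR a b f g l1 l2 : is_RInt f a b l1 -> is_RInt g a b l2 ->
  is_RInt (fun x => f x + g x) a b (l1 + l2).
Proof. intros H1 H2. apply (is_RInt_plus (V := R_NormedModule) f g a b l1 l2 H1 H2). Qed.

Lemma sum_mult_r' (a : R) (u : nat -> R) n m : sum_n_m u n m * a = sum_n_m (fun k => u k * a) n m.
Proof. exact (eq_sym (sum_n_m_mult_r a u n m)). Qed.
Lemma sum_mult_l' (a : R) (u : nat -> R) n m : a * sum_n_m u n m = sum_n_m (fun k => a * u k) n m.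
Proof. exact (eq_sym (sum_n_m_mult_l a u n m)). Qed.

Lemma is_RInt_double a b (f g : nat -> R -> R) (C : nat -> nat -> R) (al be : nat -> R) m1 M1 m2 M2 :
  (forall k l, (m1 <= k <= M1)%nat -> (m2 <= l <= M2)%nat ->
     is_RInt (fun x => f k x * g l x) a b (C k l)) ->
  is_RInt (fun x => sum_n_m (fun k => al k * f k x) m1 M1 * sum_n_m (fun l => be l * g l x) m2 M2) a b
    (sum_n_m (fun k => sum_n_m (fun l => al k * C k l * be l) m2 M2) m1 M1).
Proof.
  intros H.
  apply is_RInt_ext with
    (fun x => sum_n_m (fun k => sum_n_m (fun l => al k * (f k x * g l x) * be l) m2 M2) m1 M1).
  { intros x _. rewrite sum_mult_r'. apply sum_n_m_ext_loc. intros k _.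
    rewrite Rmult_assoc, sum_mult_l', sum_mult_l'. apply sum_n_m_ext_loc. intros; simpl; ring. }
  apply is_RInt_sum. intros k Hk. apply is_RInt_sum. intros l Hl.
  apply is_RInt_ext with (fun x => be l * (al k * (f k x * g l x))).
  { intros; simpl; ring. }
  replace (al k * C k l * be l) with (be l * (al k * C k l)) by ring.
  apply is_RInt_scalR, is_RInt_scalR, H; auto.
Qed.

Lemma int_sq_zero a b f : a < b -> cnt a b f -> is_RInt (fun x => f x * f x) a b 0 ->
  forall x, a <= x <= b -> f x = 0.
Proof.
  intros Hab Hc HI x0 Hx0. destruct (Req_dec (f x0) 0) as [|Hne]; auto. exfalso.
  set (e := f x0 * f x0).
  assert (He : 0 < e) by (unfold e; nra).
  assert (Hc2 : cnt a b (fun x => f x * f x)) by (apply cnt_mult; auto).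
  assert (Hct := Hc2 x0). apply continuity_pt_filterlim in Hct.
  destruct (Hct (e/2)) as [d [Hd Hy]]; [lra|].
  rewrite cl_id in Hy by auto. fold e in Hy.
  set (c := Rmax a (x0 - d/2)). set (dd := Rmin b (x0 + d/2)).
  assert (Hcd : c < dd).
  { unfold c, dd, Rmax, Rmin; repeat destruct Rle_dec; lra. }
  assert (Hac : a <= c) by (unfold c; apply Rmax_l).
  assert (Hdb : dd <= b) by (unfold dd; apply Rmin_l).
  assert (Hcb : c <= b) by (unfold c, Rmax; destruct Rle_dec; lra).
  assert (Had : a <= dd) by (unfold dd, Rmin; destruct Rle_dec; lra).
  assert (E1 := cnt_ex a c _ Hac (cnt_restr a b a c _ ltac:(lra) Hac ltac:(lra) Hc2)).
  assert (E2 := cnt_ex c dd _ ltac:(lra) (cnt_restr a b c dd _ Hac ltac:(lra) Hdb Hc2)).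
  assert (E3 := cnt_ex dd b _ Hdb (cnt_restr a b dd b _ ltac:(lra) Hdb ltac:(lra) Hc2)).
  apply (is_RInt_unique (V := R_CompleteNormedModule)) in HI.
  rewrite <- (RInt_Chasles _ a c b), <- (RInt_Chasles _ c dd b) in HI; auto.
  2:{ apply (ex_RInt_Chasles _ c dd b); auto. }
  simpl in HI. unfold plus in HI; simpl in HI.
  assert (P1 : 0 <= RInt (fun x => f x * f x) a c) by (apply RInt_ge_0; auto; intros; nra).
  assert (P3 : 0 <= RInt (fun x => f x * f x) dd b) by (apply RInt_ge_0; auto; intros; nra).
  assert (P2 : RInt (fun _ => e/2) c dd <= RInt (fun x => f x * f x) c dd).
  { apply RInt_le; auto. lra. apply ex_RInt_const.
    intros x Hx. destruct (Req_dec x x0) as [->|Hxne]; [fold e; lra|].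
    specialize (Hy x).
    assert (Hxd : Rabs (x - x0) < d).
    { unfold c, dd, Rmax, Rmin in Hx; repeat destruct Rle_dec in Hx;
      unfold Rabs; destruct Rcase_abs; lra. }
    specialize (Hy (conj (conj I (not_eq_sym Hxne)) Hxd)).
    simpl in Hy. unfold R_dist in Hy. rewrite cl_id in Hy by lra.
    unfold Rabs in Hy; destruct Rcase_abs in Hy; lra. }
  rewrite RInt_const in P2. unfold scal in P2; simpl in P2; unfold mult in P2; simpl in P2.
  assert (0 < (dd - c) * (e/2)) by (apply Rmult_lt_0_compat; lra).
  lra.
Qed.

Lemma is_RInt_uniqR (f : R -> R) a b (l1 l2 : R) : is_RInt f a b l1 -> is_RInt f a b l2 -> l1 = l2.
Proof.
  intros H1 H2. apply (is_RInt_unique (V := R_CompleteNormedModule)) in H1.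
  apply (is_RInt_unique (V := R_CompleteNormedModule)) in H2. congruence.
Qed.

Lemma cnt_affine a b al be : a <= b -> cnt a b (fun x => al + be * x).
Proof.
  intros Hab. apply cnt_glob; auto. intros x. apply continuity_pt_filterlim. reg.
Qed.

Lemma hd_affine a b al be : has_deriv_on a b (fun x => al + be * x) (fun _ => be).
Proof. apply hd_poly. intros x. auto_derive; auto. ring. Qed.

Lemma affine_of_zero a b g g1 g2 : a < b -> has_deriv_on a b g g1 -> has_deriv_on a b g1 g2 ->
  (forall x, a <= x <= b -> g2 x = 0) ->
  exists al be, forall x, a <= x <= b -> g x = al + be * x.
Proof.
  intros Hab Hg Hg1 Hz.
  assert (Hc : forall x, a <= x <= b -> g1 x = g1 a).
  { intros x Hx. destruct (Req_dec x a) as [->|Hne]; auto.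
    assert (H := FTC a x g1 (fun _ => 0) ltac:(lra)
      (hd_ext_der a x g1 g2 _ (fun y Hy => Hz y ltac:(lra)) (hd_restr a b a x _ _ ltac:(lra) ltac:(lra) Hg1))
      (cnt_const a x 0)).
    assert (H2 := is_RInt_zero a x). assert (E := is_RInt_uniqR _ _ _ _ _ H H2). lra. }
  exists (g a - g1 a * a), (g1 a). intros x Hx.
  destruct (Req_dec x a) as [->|Hne]; [ring|].
  assert (H := FTC a x g (fun _ => g1 a) ltac:(lra)
      (hd_ext_der a x g g1 _ (fun y Hy => Hc y ltac:(lra)) (hd_restr a b a x _ _ ltac:(lra) ltac:(lra) Hg))
      (cnt_const a x _)).
  assert (H2 := is_RInt_const (V := R_NormedModule) a x (g1 a)).
  assert (E := is_RInt_uniqR _ _ _ _ _ H H2).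
  unfold scal in E; simpl in E; unfold mult in E; simpl in E. lra.
Qed.

Lemma pc_affine c d h h1 h2 c0 c1 c2 c3 : c < d -> has_deriv_on c d h h1 -> has_deriv_on c d h1 h2 ->
  (forall x, c <= x <= d -> h x = c0 + c1 * x + c2 * x ^ 2 + c3 * x ^ 3) ->
  forall x, c <= x <= d -> h2 x = 2 * c2 + 6 * c3 * x.
Proof.
  intros Hcd Hh Hh1 Hq.
  assert (Q1 : has_deriv_on c d h (fun x => c1 + 2 * c2 * x + 3 * c3 * x ^ 2)).
  { apply hd_ext_fun with (fun x => c0 + c1 * x + c2 * x ^ 2 + c3 * x ^ 3).
    { intros; symmetry; auto. }
    apply hd_poly. intros x. auto_derive; auto. ring. }
  assert (E1 := hd_unique c d h _ _ Hcd Hh Q1).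
  assert (Q2 : has_deriv_on c d (fun x => c1 + 2 * c2 * x + 3 * c3 * x ^ 2) h2).
  { apply hd_ext_fun with h1; auto. }
  assert (Q3 : has_deriv_on c d (fun x => c1 + 2 * c2 * x + 3 * c3 * x ^ 2) (fun x => 2 * c2 + 6 * c3 * x)).
  { apply hd_poly. intros x. auto_derive; auto. ring. }
  apply (hd_unique c d _ _ _ Hcd Q2 Q3).
Qed.

Lemma tmono n t : knots_incr n t -> forall i j, (1 <= i)%nat -> (i <= j)%nat -> (j <= n + 1)%nat -> t i <= t j.
Proof.
  intros Hk i j Hi Hij Hj. induction j as [|j IH]; [lia|].
  destruct (Nat.eq_dec i (S j)) as [->|Hne]; [lra|].
  assert (t j <= t (S j)) by (left; apply Hk; lia).
  assert (t i <= t j) by (apply IH; lia). lra.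
Qed.

Definition PA (n : nat) (t : nat -> R) (h2 : R -> R) := forall i, (1 <= i <= n)%nat ->
  exists al be, forall x, t i <= x <= t (S i) -> h2 x = al + be * x.

Lemma PA_zero n t : PA n t (fun _ => 0).
Proof. intros i Hi; exists 0, 0; intros; ring. Qed.
Lemma PA_plus n t f g : PA n t f -> PA n t g -> PA n t (fun x => f x + g x).
Proof.
  intros Hf Hg i Hi. destruct (Hf i Hi) as [a1 [b1 H1]]. destruct (Hg i Hi) as [a2 [b2 H2]].
  exists (a1 + a2), (b1 + b2). intros x Hx. rewrite H1, H2 by auto; ring.
Qed.
Lemma PA_scal n t k f : PA n t f -> PA n t (fun x => k * f x).
Proof.
  intros Hf i Hi. destruct (Hf i Hi) as [a1 [b1 H1]].
  exists (k * a1), (k * b1). intros x Hx. rewrite H1 by auto; ring.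
Qed.

Lemma Klemma n t g g1 g2 h2 : knots_incr n t ->
  has_deriv_on (t 1%nat) (t (S n)) g g1 -> has_deriv_on (t 1%nat) (t (S n)) g1 g2 ->
  cnt (t 1%nat) (t (S n)) g2 ->
  (forall i, (1 <= i <= n + 1)%nat -> g (t i) = 0) ->
  PA n t h2 -> h2 (t 1%nat) = 0 -> h2 (t (S n)) = 0 ->
  is_RInt (fun x => g2 x * h2 x) (t 1%nat) (t (S n)) 0.
Proof.
  intros Hk Hg Hg1 Hc Hz Hpa Ha Hb.
  assert (Cl : forall m, (m <= n)%nat -> is_RInt (fun x => g2 x * h2 x) (t 1%nat) (t (S m))
     (g1 (t (S m)) * h2 (t (S m)) - g1 (t 1%nat) * h2 (t 1%nat))).
  { induction m as [|m IH]; intros Hm.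
    - replace (g1 (t 1%nat) * h2 (t 1%nat) - g1 (t 1%nat) * h2 (t 1%nat)) with (@zero R_NormedModule)
        by (simpl; unfold zero; simpl; ring).
      apply is_RInt_point.
    - set (c := t (S m)). set (d := t (S (S m))).
      assert (Hcd : c < d) by (apply Hk; lia).
      assert (H1c : t 1%nat <= c) by (apply (tmono n t Hk); lia).
      assert (Hdb : d <= t (S n)) by (apply (tmono n t Hk); lia).
      destruct (Hpa (S m) ltac:(lia)) as [al [be Hab]]. fold c d in Hab.
      assert (HP : has_deriv_on c d (fun x => g1 x * (al + be * x) + (- be) * g x)
                     (fun x => g2 x * (al + be * x))).
      { apply hd_ext_der with (fun x => (g2 x * (al + be * x) + g1 x * be) + (- be) * g1 x);
        [intros; simpl; ring|].
        apply hd_plus; [auto| apply hd_mult; [auto| |apply hd_affine] | apply hd_scal; auto].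
        - apply (hd_restr _ _ _ _ _ _ H1c Hdb Hg1).
        - apply (hd_restr _ _ _ _ _ _ H1c Hdb Hg). }
      assert (HF := FTC c d _ _ Hcd HP (cnt_mult _ _ _ _
          (cnt_restr _ _ c d _ H1c ltac:(lra) Hdb Hc) (cnt_affine c d al be ltac:(lra)))).
      assert (HF2 : is_RInt (fun x => g2 x * h2 x) c d
                (g1 d * h2 d - g1 c * h2 c)).
      { replace (g1 d * h2 d - g1 c * h2 c) with
          (g1 d * (al + be * d) + - be * g d - (g1 c * (al + be * c) + - be * g c)).
        2:{ rewrite !Hab by lra. unfold c, d. rewrite (Hz (S m)), (Hz (S (S m))) by lia. ring. }
        eapply is_RInt_ext; [|apply HF].
        intros x Hx. rewrite Rmin_left, Rmax_right in Hx by lra. simpl. rewrite (Hab x); auto; lra. }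
      assert (HH := is_RInt_Chasles (V := R_NormedModule) _ _ _ _ _ _ (IH ltac:(lia)) HF2).
      replace (g1 d * h2 d - g1 (t 1%nat) * h2 (t 1%nat)) with
        (plus (g1 c * h2 c - g1 (t 1%nat) * h2 (t 1%nat)) (g1 d * h2 d - g1 c * h2 c)).
      exact HH. unfold plus; simpl. ring. }
  specialize (Cl n (le_n n)). rewrite Ha, Hb in Cl.
  replace 0 with (g1 (t (S n)) * 0 - g1 (t 1%nat) * 0) by ring. exact Cl.
Qed.

Definition C2c a b (F F2 : R -> R) :=
  exists F1, has_deriv_on a b F F1 /\ has_deriv_on a b F1 F2 /\ cnt a b F2.

Lemma C2c_zero a b : C2c a b (fun _ => 0) (fun _ => 0).
Proof. exists (fun _ => 0); repeat split; try apply hd_const; apply cnt_const. Qed.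

Lemma C2c_plus a b F F2 G G2 : a < b -> C2c a b F F2 -> C2c a b G G2 ->
  C2c a b (fun x => F x + G x) (fun x => F2 x + G2 x).
Proof.
  intros Hab [F1 [H1 [H2 H3]]] [G1 [K1 [K2 K3]]].
  exists (fun x => F1 x + G1 x); repeat split; try apply hd_plus; auto. apply cnt_plus; auto.
Qed.

Lemma C2c_scal a b k F F2 : a < b -> C2c a b F F2 -> C2c a b (fun x => k * F x) (fun x => k * F2 x).
Proof.
  intros Hab [F1 [H1 [H2 H3]]].
  exists (fun x => k * F1 x); repeat split; try apply hd_scal; auto. apply cnt_scal; auto.
Qed.

Lemma C2c_affine a b al be : a < b -> C2c a b (fun x => al + be * x) (fun _ => 0).
Proof.
  intros Hab. exists (fun _ => be); repeat split; [apply hd_affine|apply hd_const|apply cnt_const].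
Qed.

Lemma sum_all_zero (u : nat -> R) m M : (forall k, (m <= k <= M)%nat -> u k = 0) -> sum_n_m u m M = 0.
Proof.
  intros H. rewrite (sum_n_m_ext_loc u (fun _ => zero)); [apply (sum_n_m_const_zero (G := R_AbelianMonoid))|].
  intros; rewrite H; auto.
Qed.

Lemma sum_delta (u : nat -> R) m M i : (m <= i <= M)%nat ->
  (forall k, (m <= k <= M)%nat -> k <> i -> u k = 0) -> sum_n_m u m M = u i.
Proof.
  intros Hi H. rewrite (sum_n_m_Chasles u m i M) by lia.
  rewrite (sum_all_zero u (S i) M) by (intros; apply H; lia).
  destruct i as [|i].
  - assert (m = 0%nat) by lia. subst. rewrite sum_n_n. simpl. unfold plus; simpl; ring.
  - rewrite sum_Sm_R by lia. rewrite (sum_all_zero u m i) by (intros; apply H; lia).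
    unfold plus; simpl; ring.
Qed.

Lemma a_lt_b n t : (1 <= n)%nat -> knots_incr n t -> t 1%nat < t (S n).
Proof.
  intros Hn Hk. assert (t 1%nat < t 2%nat) by (apply Hk; lia).
  assert (t 2%nat <= t (S n)) by (apply (tmono n t Hk); lia). lra.
Qed.

Lemma basis_C2c n t phi phi2 : (1 <= n)%nat -> knots_incr n t -> natural_basis n t phi phi2 ->
  forall k, (k <= n + 2)%nat -> C2c (t 1%nat) (t (S n)) (phi k) (phi2 k).
Proof.
  intros Hn Hk [HS _] k Hkk. destruct (HS k Hkk) as [_ [s1 [H1 [H2 H3]]]].
  exists s1; repeat split; auto. apply cont_on_cnt; auto. left; apply a_lt_b; auto.
Qed.

Lemma basis_PA n t phi phi2 : (1 <= n)%nat -> knots_incr n t -> natural_basis n t phi phi2 ->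
  forall k, (k <= n + 2)%nat -> PA n t (phi2 k).
Proof.
  intros Hn Hk [HS _] k Hkk i Hi. destruct (HS k Hkk) as [Hpc [s1 [H1 [H2 H3]]]].
  destruct (Hpc i Hi) as [c0 [c1 [c2 [c3 Hq]]]].
  assert (Hlt : t i < t (S i)) by (apply Hk; lia).
  assert (L1 : t 1%nat <= t i) by (apply (tmono n t Hk); lia).
  assert (L2 : t (S i) <= t (S n)) by (apply (tmono n t Hk); lia).
  exists (2 * c2), (6 * c3). intros x Hx.
  apply (pc_affine (t i) (t (S i)) (phi k) s1 (phi2 k) c0 c1 c2 c3); auto.
  apply (hd_restr _ _ _ _ _ _ L1 L2 H1). apply (hd_restr _ _ _ _ _ _ L1 L2 H2).
Qed.

Lemma fam_C2c n t phi phi2 : (1 <= n)%nat -> knots_incr n t -> natural_basis n t phi phi2 ->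
  forall (w : nat -> R) m M, (M <= n + 2)%nat ->
  C2c (t 1%nat) (t (S n)) (fun x => sum_n_m (fun k => w k * phi k x) m M)
                          (fun x => sum_n_m (fun k => w k * phi2 k x) m M).
Proof.
  intros Hn Hk Hb w m M HM.
  apply (fam_sum2 (C2c (t 1%nat) (t (S n))) (C2c_zero _ _)
           (fun f1 f2 g1 g2 H1 H2 => C2c_plus _ _ _ _ _ _ (a_lt_b n t Hn Hk) H1 H2)
           (fun k x => w k * phi k x) (fun k x => w k * phi2 k x)).
  intros k Hkk. apply C2c_scal. apply a_lt_b; auto. apply (basis_C2c n t phi phi2); auto. lia.
Qed.

Lemma fam_PA n t phi phi2 : (1 <= n)%nat -> knots_incr n t -> natural_basis n t phi phi2 ->
  forall (w : nat -> R) m M, (M <= n + 2)%nat ->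
  PA n t (fun x => sum_n_m (fun k => w k * phi2 k x) m M).
Proof.
  intros Hn Hk Hb w m M HM.
  apply (fam_sum (PA n t) (PA_zero n t) (PA_plus n t) (fun k x => w k * phi2 k x)).
  intros k Hkk. apply PA_scal. apply (basis_PA n t phi phi2); auto. lia.
Qed.

Lemma fam_node n t phi phi2 : natural_basis n t phi phi2 ->
  forall (w : nat -> R) m M i, (m <= 1)%nat -> (n + 1 <= M <= n + 2)%nat -> (1 <= i <= n + 1)%nat ->
  sum_n_m (fun k => w k * phi k (t i)) m M = w i.
Proof.
  intros [_ [H0t [_ [_ [Hj [Hnt _]]]]]] w m M i Hm HM Hi.
  rewrite (sum_delta _ m M i); [| lia |]. 2:{ intros k Hk Hki;
    destruct (Nat.eq_dec k 0) as [->|]; [rewrite H0t; auto; simpl; ring|];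
    destruct (Nat.eq_dec k (n + 2)) as [->|]; [rewrite Hnt; auto; simpl; ring|];
    destruct (Hj k ltac:(lia)) as [Hv _]; rewrite Hv by auto;
    replace (Nat.eqb i k) with false by (symmetry; apply Nat.eqb_neq; lia); simpl; ring. }
  destruct (Hj i Hi) as [Hv _]. rewrite Hv by auto. rewrite Nat.eqb_refl. simpl; ring.
Qed.

Lemma fam_end_a n t phi phi2 : natural_basis n t phi phi2 ->
  forall (w : nat -> R), sum_n_m (fun k => w k * phi2 k (t 1%nat)) 0 (n + 2) = w 0%nat.
Proof.
  intros [_ [_ [H0a [_ [Hj [_ [Hna _]]]]]]] w.
  rewrite (sum_delta _ 0 (n + 2) 0); [| lia |]. 2:{ intros k Hk Hki;
    destruct (Nat.eq_dec k (n + 2)) as [->|]; [rewrite Hna; simpl; ring|];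
    destruct (Hj k ltac:(lia)) as [_ [Hv _]]; rewrite Hv; simpl; ring. }
  rewrite H0a; simpl; ring.
Qed.

Lemma fam_end_b n t phi phi2 : natural_basis n t phi phi2 ->
  forall (w : nat -> R), sum_n_m (fun k => w k * phi2 k (t (S n))) 0 (n + 2) = w (n + 2)%nat.
Proof.
  intros [_ [_ [_ [H0b [Hj [_ [_ Hnb]]]]]]] w.
  rewrite (sum_delta _ 0 (n + 2) (n + 2)); [| lia |]. 2:{ intros k Hk Hki;
    destruct (Nat.eq_dec k 0) as [->|]; [rewrite H0b; simpl; ring|];
    destruct (Hj k ltac:(lia)) as [_ [_ Hv]]; rewrite Hv; simpl; ring. }
  rewrite Hnb; simpl; ring.
Qed.

Lemma mid_end n t phi phi2 : natural_basis n t phi phi2 ->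
  forall (w : nat -> R), sum_n_m (fun k => w k * phi2 k (t 1%nat)) 1 (n + 1) = 0 /\
                         sum_n_m (fun k => w k * phi2 k (t (S n))) 1 (n + 1) = 0.
Proof.
  intros [_ [_ [_ [_ [Hj _]]]]] w. split; apply sum_all_zero; intros k Hk;
  destruct (Hj k Hk) as [_ [Ha Hb]]; [rewrite Ha|rewrite Hb]; simpl; ring.
Qed.

Lemma Cm_S n t phi2 k l : Cmat n t phi2 (S k) (S l) =
  RInt (fun x => phi2 k x * phi2 l x) (t 1%nat) (t (S n)).
Proof. unfold Cmat. simpl. rewrite !Nat.sub_0_r. reflexivity. Qed.

Lemma sum_shift (g : nat -> R) m M : sum_n_m g (S m) (S M) = sum_n_m (fun k => g (S k)) m M.
Proof. rewrite sum_n_m_S. reflexivity. Qed.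

Lemma qform_eq n t phi2 v : qform (Cmat n t phi2) 1 (n + 3) v =
  sum_n_m (fun k => sum_n_m (fun l => v (S k) *
     RInt (fun x => phi2 k x * phi2 l x) (t 1%nat) (t (S n)) * v (S l)) 0 (n + 2)) 0 (n + 2).
Proof.
  unfold qform. replace (n + 3)%nat with (S (n + 2)) by lia. rewrite sum_shift.
  apply sum_n_m_ext_loc. intros k _. rewrite sum_shift. apply sum_n_m_ext_loc.
  intros l _. rewrite Cm_S. reflexivity.
Qed.

Lemma cc_is n t phi phi2 : (1 <= n)%nat -> knots_incr n t -> natural_basis n t phi phi2 ->
  forall k l, (k <= n + 2)%nat -> (l <= n + 2)%nat ->
  is_RInt (fun x => phi2 k x * phi2 l x) (t 1%nat) (t (S n))
          (RInt (fun x => phi2 k x * phi2 l x) (t 1%nat) (t (S n))).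
Proof.
  intros Hn Hk Hb k l Hkk Hll.
  apply (RInt_correct (V := R_CompleteNormedModule)). apply cnt_ex. left; apply a_lt_b; auto.
  destruct (basis_C2c n t phi phi2 Hn Hk Hb k Hkk) as [_ [_ [_ H1]]].
  destruct (basis_C2c n t phi phi2 Hn Hk Hb l Hll) as [_ [_ [_ H2]]].
  apply cnt_mult; auto.
Qed.

Lemma quad_is n t phi phi2 : (1 <= n)%nat -> knots_incr n t -> natural_basis n t phi phi2 ->
  forall (w : nat -> R) m M, (M <= n + 2)%nat ->
  is_RInt (fun x => sum_n_m (fun k => w k * phi2 k x) m M * sum_n_m (fun k => w k * phi2 k x) m M)
     (t 1%nat) (t (S n))
     (sum_n_m (fun k => sum_n_m (fun l => w k *
         RInt (fun x => phi2 k x * phi2 l x) (t 1%nat) (t (S n)) * w l) m M) m M).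
Proof.
  intros Hn Hk Hb w m M HM.
  apply (is_RInt_double _ _ phi2 phi2 (fun k l => RInt (fun x => phi2 k x * phi2 l x) (t 1%nat) (t (S n)))).
  intros; apply (cc_is n t phi phi2); auto; lia.
Qed.

Lemma zero_range n t phi phi2 : (1 <= n)%nat -> knots_incr n t -> natural_basis n t phi phi2 ->
  forall (w : nat -> R) m M, (m <= 1)%nat -> (n + 1 <= M <= n + 2)%nat ->
  (forall x, t 1%nat <= x <= t (S n) -> sum_n_m (fun k => w k * phi2 k x) m M = 0) ->
  exists al be, forall i, (1 <= i <= n + 1)%nat -> w i = al + be * t i.
Proof.
  intros Hn Hk Hb w m M Hm HM Hz.
  destruct (fam_C2c n t phi phi2 Hn Hk Hb w m M ltac:(lia)) as [F1 [H1 [H2 _]]].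
  destruct (affine_of_zero _ _ _ _ _ (a_lt_b n t Hn Hk) H1 H2 Hz) as [al [be Hab]].
  exists al, be. intros i Hi. rewrite <- (fam_node n t phi phi2 Hb w m M i) by auto.
  apply Hab. split; apply (tmono n t Hk); lia.
Qed.

Lemma range_orth n t phi phi2 : (1 <= n)%nat -> knots_incr n t -> natural_basis n t phi phi2 ->
  forall (w : nat -> R) m M al be h2, (m <= 1)%nat -> (n + 1 <= M <= n + 2)%nat ->
  (forall i, (1 <= i <= n + 1)%nat -> w i = al + be * t i) ->
  PA n t h2 -> h2 (t 1%nat) = 0 -> h2 (t (S n)) = 0 ->
  is_RInt (fun x => sum_n_m (fun k => w k * phi2 k x) m M * h2 x) (t 1%nat) (t (S n)) 0.
Proof.
  intros Hn Hk Hb w m M al be h2 Hm HM Hw Hpa Ha Hbb.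
  assert (Hab := a_lt_b n t Hn Hk).
  destruct (C2c_plus _ _ _ _ _ _ Hab (fam_C2c n t phi phi2 Hn Hk Hb w m M ltac:(lia))
             (C2c_scal _ _ (-1) _ _ Hab (C2c_affine _ _ al be Hab))) as [G1 [H1 [H2 H3]]].
  assert (K := Klemma n t _ _ _ h2 Hk H1 H2 H3).
  eapply is_RInt_ext; [|apply K; auto].
  - intros; simpl; ring.
  - intros i Hi. rewrite (fam_node n t phi phi2 Hb w m M i) by auto. rewrite Hw by auto. ring.
Qed.

Lemma phi_orth n t phi phi2 : (1 <= n)%nat -> knots_incr n t -> natural_basis n t phi phi2 ->
  forall k h2, (k = 0 \/ k = n + 2)%nat -> PA n t h2 -> h2 (t 1%nat) = 0 -> h2 (t (S n)) = 0 ->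
  is_RInt (fun x => phi2 k x * h2 x) (t 1%nat) (t (S n)) 0.
Proof.
  intros Hn Hk Hb k h2 Hkk Hpa Ha Hbb.
  destruct (basis_C2c n t phi phi2 Hn Hk Hb k ltac:(lia)) as [G1 [H1 [H2 H3]]].
  apply (Klemma n t (phi k) G1); auto.
  destruct Hb as [_ [H0t [_ [_ [_ [Hnt _]]]]]].
  intros i Hi. destruct Hkk as [->| ->]; auto.
Qed.

Lemma Cmat_sym n t phi2 k l : Cmat n t phi2 k l = Cmat n t phi2 l k.
Proof. unfold Cmat. f_equal. apply functional_extensionality; intros; ring. Qed.

Lemma sq_nonneg_int a b f l : a <= b -> is_RInt (fun x => f x * f x) a b l -> 0 <= l.
Proof. intros Hab H. apply (is_RInt_ge_0 _ a b l Hab H). intros; nra. Qed.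

Theorem proposition2 (n : nat) (t : nat -> R) (phi phi2 : nat -> R -> R) :
  (1 <= n)%nat ->
  knots_incr n t ->
  natural_basis n t phi phi2 ->
  let c := Cmat n t phi2 in
  (* (i) symmetric and non-negative definite *)
  ((forall k l, (1 <= k <= n + 3)%nat -> (1 <= l <= n + 3)%nat -> c k l = c l k) /\
   (forall v : nat -> R, 0 <= qform c 1 (n + 3) v)) /\
  (* (ii) *)
  (forall (u1 un1 : R) (p : nat -> R),
     qform c 1 (n + 3) (ext_vec n u1 p un1) = 0 <->
     (u1 = 0 /\ un1 = 0 /\ in_range_L n t p)) /\
  (* (iii) *)
  (forall j, (1 <= j <= n + 1)%nat -> c 1%nat (j + 1)%nat = 0 /\ c (n + 3)%nat (j + 1)%nat = 0) /\
  (* (iv) the corner 2x2 matrix is symmetric positive definite *)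
  (c 1%nat (n + 3)%nat = c (n + 3)%nat 1%nat /\
   forall x y : R, (x <> 0 \/ y <> 0) ->
     0 < x * c 1%nat 1%nat * x + x * c 1%nat (n + 3)%nat * y
         + y * c (n + 3)%nat 1%nat * x + y * c (n + 3)%nat (n + 3)%nat * y) /\
  (* (v) null space of C(2,n+2) equals R(L) *)
  (forall p : nat -> R,
     (forall i, (2 <= i <= n + 2)%nat ->
        sum_n_m (fun j => c i j * p (j - 1)%nat) 2 (n + 2) = 0) <->
     in_range_L n t p) /\
  (* (vi) *)
  (forall (u1 un1 : R) (p : nat -> R) (s2 : R -> R),
     C2_on (t 1%nat) (t (S n))
       (fun x => u1 * phi 0%nat x + sum_n_m (fun j => p j * phi j x) 1 (n + 1)
                 + un1 * phi (n + 2)%nat x) s2 ->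
     RInt (fun x => (Rabs (s2 x)) ^ 2) (t 1%nat) (t (S n)) =
       u1 ^ 2 * c 1%nat 1%nat + un1 ^ 2 * c (n + 3)%nat (n + 3)%nat
       + 2 * c 1%nat (n + 3)%nat * u1 * un1
       + sum_n_m (fun i => sum_n_m (fun j => p (i - 1)%nat * c i j * p (j - 1)%nat) 2 (n + 2)) 2 (n + 2)).
Proof.
  intros Hn Hk Hb c. unfold c; clear c.
  assert (Hab := a_lt_b n t Hn Hk).
  assert (Hab' : t 1%nat <= t (S n)) by lra.
  split.
  {
    split; [intros; apply Cmat_sym|].
    intros v. rewrite qform_eq.
    exact (sq_nonneg_int _ _ _ _ Hab' (quad_is n t phi phi2 Hn Hk Hb (fun k => v (S k)) 0 (n + 2) (le_n _))). }
  split.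
  {
    intros u1 un1 p. rewrite qform_eq.
    set (w := fun k => ext_vec n u1 p un1 (S k)).
    assert (Hw0 : w 0%nat = u1) by reflexivity.
    assert (HwN : w (n + 2)%nat = un1).
    { unfold w, ext_vec. replace (Nat.eqb (S (n + 2)) 1) with false by (symmetry; apply Nat.eqb_neq; lia).
      replace (Nat.eqb (S (n + 2)) (n + 3)) with true by (symmetry; apply Nat.eqb_eq; lia). auto. }
    assert (Hwi : forall i, (1 <= i <= n + 1)%nat -> w i = p i).
    { intros i Hi. unfold w, ext_vec. replace (Nat.eqb (S i) 1) with false by (symmetry; apply Nat.eqb_neq; lia).
      replace (Nat.eqb (S i) (n + 3)) with false by (symmetry; apply Nat.eqb_neq; lia).
      f_equal; lia. }
    assert (HQ := quad_is n t phi phi2 Hn Hk Hb w 0 (n + 2) (le_n _)).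
    destruct (fam_C2c n t phi phi2 Hn Hk Hb w 0 (n + 2) (le_n _)) as [V1 [HV1 [HV2 HVc]]].
    split.
    - intros HQ0.
      assert (HQ' : is_RInt (fun x => sum_n_m (fun k => w k * phi2 k x) 0 (n + 2) *
                                     sum_n_m (fun k => w k * phi2 k x) 0 (n + 2)) (t 1%nat) (t (S n)) 0).
      { rewrite <- HQ0. exact HQ. }
      assert (Vz := int_sq_zero _ _ _ Hab HVc HQ').
      split; [|split].
      + rewrite <- Hw0, <- (fam_end_a n t phi phi2 Hb w). apply Vz; lra.
      + rewrite <- HwN, <- (fam_end_b n t phi phi2 Hb w). apply Vz; lra.
      + destruct (zero_range n t phi phi2 Hn Hk Hb w 0 (n + 2) ltac:(lia) ltac:(lia) Vz) as [al [be Hr]].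
        exists al, be. intros i Hi. rewrite <- Hwi by auto. auto.
    - intros [Hu1 [Hun1 [al [be Hp]]]].
      assert (HO := range_orth n t phi phi2 Hn Hk Hb w 0 (n + 2) al be
                      (fun x => sum_n_m (fun k => w k * phi2 k x) 0 (n + 2)) ltac:(lia) ltac:(lia)).
      refine (is_RInt_uniqR _ _ _ _ _ HQ _). apply HO.
      + intros i Hi. rewrite Hwi by auto. auto.
      + apply (fam_PA n t phi phi2 Hn Hk Hb); lia.
      + rewrite (fam_end_a n t phi phi2 Hb w). rewrite Hw0; auto.
      + rewrite (fam_end_b n t phi phi2 Hb w). rewrite HwN; auto. }
  split.
  {
    intros j Hj. replace (j + 1)%nat with (S j) by lia.
    replace (n + 3)%nat with (S (n + 2)) by lia. rewrite !Cm_S.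
    pose proof Hb as [HS [H0t [H0a [H0b [Hjb [Hnt [Hna Hnb]]]]]]].
    destruct (Hjb j Hj) as [_ [Hja Hjbb]].
    assert (PAj := basis_PA n t phi phi2 Hn Hk Hb j ltac:(lia)).
    split; apply (is_RInt_unique (V := R_CompleteNormedModule));
      apply (phi_orth n t phi phi2 Hn Hk Hb); auto. }
  split.
  {
    split; [apply Cmat_sym|].
    intros x y Hxy.
    replace (n + 3)%nat with (S (n + 2)) by lia. rewrite !Cm_S.
    pose proof Hb as [HS [H0t [H0a [H0b [Hjb [Hnt [Hna Hnb]]]]]]].
    set (A := fun k l => RInt (fun z => phi2 k z * phi2 l z) (t 1%nat) (t (S n))).
    change (0 < x * A 0%nat 0%nat * x + x * A 0%nat (n + 2)%nat * y + y * A (n + 2)%nat 0%nat * x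
              + y * A (n + 2)%nat (n + 2)%nat * y).
    assert (I := fun k l Hk1 Hl1 => cc_is n t phi phi2 Hn Hk Hb k l Hk1 Hl1).
    set (f := fun z => x * phi2 0%nat z + y * phi2 (n + 2)%nat z).
    assert (I1 := is_RInt_scalR _ _ _ _ x (is_RInt_scalR _ _ _ _ x (I 0%nat 0%nat ltac:(lia) ltac:(lia)))).
    assert (I2 := is_RInt_scalR _ _ _ _ x (is_RInt_scalR _ _ _ _ y (I 0%nat (n+2)%nat ltac:(lia) ltac:(lia)))).
    assert (I3 := is_RInt_scalR _ _ _ _ y (is_RInt_scalR _ _ _ _ x (I (n+2)%nat 0%nat ltac:(lia) ltac:(lia)))).
    assert (I4 := is_RInt_scalR _ _ _ _ y (is_RInt_scalR _ _ _ _ y (I (n+2)%nat (n+2)%nat ltac:(lia) ltac:(lia)))).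
    assert (I5 := is_RInt_plusR _ _ _ _ _ _ (is_RInt_plusR _ _ _ _ _ _ (is_RInt_plusR _ _ _ _ _ _ I1 I2) I3) I4).
    assert (HI : is_RInt (fun z => f z * f z) (t 1%nat) (t (S n))
       (x * A 0%nat 0%nat * x + x * A 0%nat (n + 2)%nat * y + y * A (n + 2)%nat 0%nat * x
              + y * A (n + 2)%nat (n + 2)%nat * y)).
    { eapply is_RInt_ext; [|refine (eq_ind _ (fun v => is_RInt _ _ _ v) I5 _ _)].
      - intros z _. unfold f. simpl. ring.
      - unfold A. simpl. ring. }
    assert (Hf : cnt (t 1%nat) (t (S n)) f).
    { destruct (basis_C2c n t phi phi2 Hn Hk Hb 0 ltac:(lia)) as [_ [_ [_ C1]]].
      destruct (basis_C2c n t phi phi2 Hn Hk Hb (n + 2) ltac:(lia)) as [_ [_ [_ C2]]].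
      apply cnt_plus; apply cnt_scal; auto. }
    assert (Hge := sq_nonneg_int _ _ _ _ Hab' HI).
    destruct Hge as [|Heq]; auto. exfalso. rewrite <- Heq in HI.
    assert (Z := int_sq_zero _ _ _ Hab Hf HI).
    assert (Za := Z (t 1%nat) ltac:(lra)). assert (Zb := Z (t (S n)) ltac:(lra)).
    unfold f in Za, Zb. rewrite H0a, Hna in Za. rewrite H0b, Hnb in Zb.
    destruct Hxy; lra. }
  split.
  {
    intros p.
    set (A := fun k l => RInt (fun z => phi2 k z * phi2 l z) (t 1%nat) (t (S n))).
    set (P2 := fun x => sum_n_m (fun j => p j * phi2 j x) 1 (n + 1)).
    assert (Hrow : forall k, (k <= n + 2)%nat ->
      is_RInt (fun x => phi2 k x * P2 x) (t 1%nat) (t (S n)) (sum_n_m (fun j => p j * A k j) 1 (n + 1))).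
    { intros k Hkk.
      apply is_RInt_ext with (fun x => sum_n_m (fun j => p j * (phi2 k x * phi2 j x)) 1 (n + 1)).
      { intros x _. unfold P2. rewrite sum_mult_l'. apply sum_n_m_ext_loc. intros; simpl; ring. }
      apply is_RInt_sum. intros j Hj. apply is_RInt_scalR. apply (cc_is n t phi phi2); auto; lia. }
    assert (Hconv : forall k, sum_n_m (fun j => Cmat n t phi2 (S k) j * p (j - 1)%nat) 2 (n + 2)
                       = sum_n_m (fun j => p j * A k j) 1 (n + 1)).
    { intros k. replace (n + 2)%nat with (S (n + 1)) by lia. rewrite sum_shift.
      apply sum_n_m_ext_loc. intros j _. rewrite Cm_S. simpl. rewrite Nat.sub_0_r. unfold A. simpl; ring. }
    destruct (fam_C2c n t phi phi2 Hn Hk Hb p 1 (n + 1) ltac:(lia)) as [V1 [HV1 [HV2 HVc]]].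
    split.
    - intros H.
      assert (HQ := quad_is n t phi phi2 Hn Hk Hb p 1 (n + 1) ltac:(lia)).
      assert (HQ' : is_RInt (fun x => P2 x * P2 x) (t 1%nat) (t (S n)) 0).
      { refine (eq_ind _ (fun v => is_RInt _ _ _ v) HQ _ _).
        apply sum_all_zero. intros k Hkk.
        transitivity (p k * sum_n_m (fun j => p j * A k j) 1 (n + 1)).
        { rewrite sum_mult_l'. apply sum_n_m_ext_loc. intros; unfold A; simpl; ring. }
        rewrite <- Hconv. rewrite H by lia. simpl; ring. }
      assert (Vz := int_sq_zero _ _ _ Hab HVc HQ').
      destruct (zero_range n t phi phi2 Hn Hk Hb p 1 (n + 1) ltac:(lia) ltac:(lia) Vz) as [al [be Hr]].
      exists al, be. exact Hr.
    - intros [al [be Hp]] i Hi.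
      replace i with (S (i - 1)) by lia. rewrite Hconv.
      refine (is_RInt_uniqR _ _ _ _ _ (Hrow (i - 1)%nat ltac:(lia)) _).
      apply is_RInt_ext with (fun x => P2 x * phi2 (i - 1)%nat x).
      { intros; simpl; ring. }
      pose proof Hb as [HS [H0t [H0a [H0b [Hjb [Hnt [Hna Hnb]]]]]]].
      destruct (Hjb (i - 1)%nat ltac:(lia)) as [_ [Hja Hjbb]].
      apply (range_orth n t phi phi2 Hn Hk Hb p 1 (n + 1) al be); auto; try lia.
      apply (basis_PA n t phi phi2); auto; lia. }
  {
    intros u1 un1 p s2 [s1 [Hs1 [Hs2 _]]].
    pose proof Hb as [HS [H0t [H0a [H0b [Hjb [Hnt [Hna Hnb]]]]]]].
    set (A := fun k l => RInt (fun z => phi2 k z * phi2 l z) (t 1%nat) (t (S n))).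
    set (P2 := fun x => sum_n_m (fun j => p j * phi2 j x) 1 (n + 1)).
    assert (HT := C2c_plus _ _ _ _ _ _ Hab
                   (C2c_plus _ _ _ _ _ _ Hab
                      (C2c_scal _ _ u1 _ _ Hab (basis_C2c n t phi phi2 Hn Hk Hb 0 ltac:(lia)))
                      (fam_C2c n t phi phi2 Hn Hk Hb p 1 (n + 1) ltac:(lia)))
                   (C2c_scal _ _ un1 _ _ Hab (basis_C2c n t phi phi2 Hn Hk Hb (n + 2) ltac:(lia)))).
    destruct HT as [T1 [HT1 [HT2 HTc]]].
    assert (E1 := hd_unique _ _ _ _ _ Hab Hs1 HT1).
    assert (E2 := hd_unique _ _ _ _ _ Hab (hd_ext_fun _ _ _ _ _ E1 Hs2) HT2).
    simpl in E2.
    assert (I := fun k l Hk1 Hl1 => cc_is n t phi phi2 Hn Hk Hb k l Hk1 Hl1).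
    assert (Hend := mid_end n t phi phi2 Hb p).
    assert (PAP : PA n t P2) by (apply (fam_PA n t phi phi2); auto; lia).
    assert (I0P := phi_orth n t phi phi2 Hn Hk Hb 0 P2 ltac:(lia) PAP (proj1 Hend) (proj2 Hend)).
    assert (INP := phi_orth n t phi phi2 Hn Hk Hb (n + 2) P2 ltac:(lia) PAP (proj1 Hend) (proj2 Hend)).
    assert (IPP := quad_is n t phi phi2 Hn Hk Hb p 1 (n + 1) ltac:(lia)).
    assert (I1 := is_RInt_scalR _ _ _ _ (u1 * u1) (I 0%nat 0%nat ltac:(lia) ltac:(lia))).
    assert (I2 := is_RInt_scalR _ _ _ _ (un1 * un1) (I (n+2)%nat (n+2)%nat ltac:(lia) ltac:(lia))).
    assert (I3 := is_RInt_scalR _ _ _ _ (2 * u1 * un1) (I 0%nat (n+2)%nat ltac:(lia) ltac:(lia))).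
    assert (I4 := is_RInt_scalR _ _ _ _ (2 * u1) I0P).
    assert (I5 := is_RInt_scalR _ _ _ _ (2 * un1) INP).
    assert (I6 := is_RInt_plusR _ _ _ _ _ _ (is_RInt_plusR _ _ _ _ _ _ (is_RInt_plusR _ _ _ _ _ _
                   (is_RInt_plusR _ _ _ _ _ _ (is_RInt_plusR _ _ _ _ _ _ I1 I2) I3) I4) I5) IPP).
    apply (is_RInt_unique (V := R_CompleteNormedModule)).
    eapply is_RInt_ext; [|refine (eq_ind _ (fun v => is_RInt _ _ _ v) I6 _ _)].
    - intros x Hx. rewrite Rmin_left, Rmax_right in Hx by lra. simpl.
      rewrite E2 by lra. assert (Habs : forall z, Rabs z * (Rabs z * 1) = z * z) by (intros; rewrite Rmult_1_r, <- Rabs_mult; apply Rabs_pos_eq; nra). rewrite Habs. unfold P2. ring.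
    - replace (n + 3)%nat with (S (n + 2)) by lia. rewrite !Cm_S.
      replace (n + 2)%nat with (S (n + 1)) by lia. rewrite sum_shift.
      replace (S (n + 1)) with (n + 2)%nat by lia. simpl.
      match goal with |- _ = _ + _ + _ + ?S1 =>
        assert (DS : S1 = sum_n_m (fun k => sum_n_m (fun l => p k *
            RInt (fun x => phi2 k x * phi2 l x) (t 1%nat) (t (S n)) * p l) 1 (n + 1)) 1 (n + 1)) end.
      { apply sum_n_m_ext_loc; intros k _. replace (n + 2)%nat with (S (n + 1)) by lia.
        rewrite sum_shift. apply sum_n_m_ext_loc; intros l _. rewrite Cm_S. simpl.
        rewrite !Nat.sub_0_r. reflexivity. }
      rewrite DS. simpl. ring. }
Qed.
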